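(* Under the standing setup, the difference in group means satisfies $$D=\frac{\delta_B+\delta_W}{(1-\gamma)\,\mathrm{Var}(X)} .$$ (In particular $0\le\gamma<1$, and $D$ has the same sign as $\delta_B+\delta_W$.)
   Context: Let $(X,Y,N)$ be a random triple with $X\in\{0,1\}$ (group membership), $Y$ a real-valued outcome, and $N$ taking values in a finite set $\mathcal N$ (neighborhoods). Write $p_n=\Pr(N=n)$, $X_n=\mathbb E[X\mid N=n]$, $Y_n=\mathbb E[Y\mid N=n]$, and let $X_N=\mathbb E[X\mid N]$, $Y_N=\mathbb E[Y\mid N]$ denote the corresponding random variables. Assume there exists $n\in\mathcal N$ with $p_n>0$ and $X_n\in(0,1)$. Fix reals $\underline Y\le\overline Y$ and assume $Y_n^x:=\mathbb E[Y\mid X=x,N=n]\in[\underline Y,\overline Y]$ whenever $\Pr(X=x,N=n)>0$. Group means: $Y^x=\mathbb E[Y\mid X=x]$ for $x\in\{0,1\}$, and $D=Y^1-Y^0$. Between-group association: $\delta_B=\mathbb E[\mathrm{Cov}(Y,X\mid N)]$. Within-group association: $\delta_W=\mathbb E[\mathrm{Cov}(Y,X_N\mid X)]$. Aggregation ratio: $\gamma=\mathrm{Var}(X_N)/\mathrm{Var}(X)$. *)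

(* Defs.v *)
(* a general probability space (T, P) carrying
   X : T -> bool (group), Y : T -> R (outcome), N : T -> I (neighbourhood, I finite). *)
From mathcomp Require Import all_boot all_order all_algebra.
From mathcomp Require Import all_classical all_reals all_analysis.
Set Implicit Arguments. Unset Strict Implicit. Unset Printing Implicit Defensive.
Import Order.TTheory GRing.Theory Num.Theory.
Local Open Scope classical_set_scope.
Local Open Scope ring_scope.

(* Expectation of a real random variable (meaningful when integrable). *)
Definition Ex d (T : measurableType d) (R : realType) (P : probability T R)
  (f : T -> R) : R := fine (\int[P]_(w in setT) (f w)%:E).

Definition Pr d (T : measurableType d) (R : realType) (P : probability T R)
  (A : set T) : R := fine (P A).

Definition condE d (T : measurableType d) (R : realType) (P : probability T R)
  (f : T -> R) (A : set T) : R :=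
  Ex P (fun w => f w * (\1_A w)) / Pr P A.

Definition condCov d (T : measurableType d) (R : realType) (P : probability T R)
  (f g : T -> R) (A : set T) : R :=
  condE P (fun w => f w * g w) A - condE P f A * condE P g A.

Definition Var d (T : measurableType d) (R : realType) (P : probability T R)
  (f : T -> R) : R := Ex P (fun w => f w ^+ 2) - (Ex P f) ^+ 2.

Section Setup.
Context d (T : measurableType d) (R : realType) (P : probability T R)
  (I : finType) (X : T -> bool) (Y : T -> R) (N : T -> I).

Definition Xr : T -> R := fun w => (X w)%:R.
Definition evN (n : I) : set T := [set w | N w = n].
Definition evX (x : bool) : set T := [set w | X w = x].
Definition evXN (x : bool) (n : I) : set T := [set w | X w = x /\ N w = n].

Definition p_ (n : I) : R := Pr P (evN n).
Definition X_ (n : I) : R := condE P Xr (evN n).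
Definition Y_ (n : I) : R := condE P Y (evN n).
Definition XN : T -> R := fun w => X_ (N w).
Definition YN : T -> R := fun w => Y_ (N w).
Definition Ycell (x : bool) (n : I) : R := condE P Y (evXN x n).
Definition Ygrp (x : bool) : R := condE P Y (evX x).
Definition Dgap : R := Ygrp true - Ygrp false.

Definition deltaB : R := Ex P (fun w => condCov P Y Xr (evN (N w))).
Definition deltaW : R := Ex P (fun w => condCov P Y XN (evX (X w))).
Definition gammaR : R := Var P XN / Var P Xr.
End Setup.

(* Main.v *)
Require Import Defs.
From mathcomp Require Import all_boot all_order all_algebra.
From mathcomp Require Import all_classical all_reals all_analysis.
From mathcomp Require Import measurable_realfun.
From mathcomp Require Import ring lra.
Import Order.TTheory GRing.Theory Num.Theory.
Local Open Scope classical_set_scope.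
Local Open Scope ring_scope.

Lemma sum_pos (R : realFieldType) (I : finType) (F : I -> R) n0 :
  (forall k, 0 <= F k) -> 0 < F n0 -> 0 < \sum_k F k.
Proof.
move=> h0 hn; rewrite (bigD1 n0) //=.
have : 0 <= \sum_(i | i != n0) F i by apply: sumr_ge0 => i _; exact: h0.
lra.
Qed.

Lemma alg (R : realFieldType) (I : finType) (q1 q0 m1 m0 a : I -> R)
  (D dB dW g VX VXN : R)
  (hq1 : forall k, 0 <= q1 k) (hq0 : forall k, 0 <= q0 k)
  (hm : forall k, q1 k + q0 k = 0 -> m1 k = 0 /\ m0 k = 0)
  (ha : forall k, a k = q1 k / (q1 k + q0 k))
  (tot : \sum_k q1 k + \sum_k q0 k = 1)
  (hex : exists n, 0 < q1 n + q0 n /\ 0 < a n /\ a n < 1)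
  (hD : D = (\sum_k m1 k) / (\sum_k q1 k) - (\sum_k m0 k) / (\sum_k q0 k))
  (hdB : dB = \sum_k (q1 k + q0 k) *
      (m1 k / (q1 k + q0 k) - (m1 k + m0 k) / (q1 k + q0 k) * a k))
  (hdW : dW = ((\sum_k a k * m1 k) / (\sum_k q1 k)
                 - (\sum_k m1 k) / (\sum_k q1 k) * ((\sum_k a k * q1 k) / (\sum_k q1 k))) * \sum_k q1 k
            + ((\sum_k a k * m0 k) / (\sum_k q0 k)
                 - (\sum_k m0 k) / (\sum_k q0 k) * ((\sum_k a k * q0 k) / (\sum_k q0 k))) * \sum_k q0 k)
  (hVX : VX = \sum_k q1 k - (\sum_k q1 k) ^+ 2)
  (hVXN : VXN = \sum_k a k ^+ 2 * (q1 k + q0 k) - (\sum_k a k * (q1 k + q0 k)) ^+ 2)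
  (hg : g = VXN / VX) :
  D = (dB + dW) / ((1 - g) * VX) /\ 0 <= g /\ g < 1 /\ Num.sg D = Num.sg (dB + dW).
Proof.
set Q1 := \sum_k q1 k; set Q0 := \sum_k q0 k.
set M1 := \sum_k m1 k; set M0 := \sum_k m0 k.
set A1 := \sum_k a k * m1 k; set A0 := \sum_k a k * m0 k.
set B1 := \sum_k a k * q1 k; set B0 := \sum_k a k * q0 k.
have hp0 k : q1 k + q0 k = 0 -> q1 k = 0 /\ q0 k = 0.
  by move=> h; have := hq1 k; have := hq0 k; split; lra.
have hap k : a k * (q1 k + q0 k) = q1 k.
  have [h|h] := eqVneq (q1 k + q0 k) 0.
    by rewrite h mulr0; case: (hp0 k h).
  by rewrite ha divfK.
have ha0 k : 0 <= a k by rewrite ha divr_ge0 // addr_ge0.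
have [n0 [hpn [han1 han2]]] := hex.
have hQ1 : 0 < Q1.
  apply: (@sum_pos _ _ _ n0) => //; rewrite -hap; exact: mulr_gt0.
have hq0n : 0 < q0 n0.
  have := hap n0; move: hpn han1 han2; set p := q1 n0 + q0 n0 => hpn han1 han2 h.
  have : 0 < p * (1 - a n0) by apply: mulr_gt0 => //; lra.
  rewrite /p in h *; nra.
have hQ0 : 0 < Q0 by apply: (@sum_pos _ _ _ n0).
have hQ0e : Q0 = 1 - Q1 by rewrite /Q0 /Q1; lra.
have hB0 : 0 < B0.
  apply: (@sum_pos _ _ _ n0); first by move=> k; apply: mulr_ge0.
  exact: mulr_gt0.
have S1 : \sum_k a k * (q1 k + q0 k) = Q1 by apply: eq_bigr => k _; exact: hap.
have S2 : \sum_k a k ^+ 2 * (q1 k + q0 k) = B1.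
  by apply: eq_bigr => k _; rewrite expr2 -mulrA hap.
have S3 : B1 + B0 = Q1.
  by rewrite /B1 /B0 -big_split /=; apply: eq_bigr => k _; rewrite -mulrDr hap.
have Sp : \sum_k (q1 k + q0 k) = 1 by rewrite big_split.
have hVXN' : VXN = \sum_k (q1 k + q0 k) * (a k - Q1) ^+ 2.
  rewrite hVXN S1 S2.
  transitivity (\sum_k (a k ^+ 2 * (q1 k + q0 k) - (2 * Q1) * (a k * (q1 k + q0 k))
                          + Q1 ^+ 2 * (q1 k + q0 k))); last first.
    by apply: eq_bigr => k _; ring.
  rewrite big_split sumrB /= -!mulr_sumr S1 S2 Sp; ring.
have VXN0 : 0 <= VXN.
  by rewrite hVXN'; apply: sumr_ge0 => k _; apply: mulr_ge0; [apply: addr_ge0|apply: sqr_ge0].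
have hVXpos : 0 < VX.
  rewrite hVX (_ : Q1 - Q1 ^+ 2 = Q1 * Q0); first exact: mulr_gt0.
  by rewrite hQ0e; ring.
have hW : (1 - g) * VX = B0.
  rewrite hg mulrBl mul1r divfK; last by rewrite gt_eqF.
  rewrite hVX hVXN S1 S2 -/Q1; lra.
have hdB' : dB = M1 - A1 - A0.
  rewrite hdB /M1 /A1 /A0 -!sumrB; apply: eq_bigr => k _.
  have [h|h] := eqVneq (q1 k + q0 k) 0.
    by case: (hm k h) => -> ->; rewrite h; ring.
  by field.
have hdW' : dW = A1 - M1 * B1 / Q1 + (A0 - M0 * B0 / Q0).
  rewrite hdW -/Q1 -/Q0 -/A1 -/A0 -/M1 -/M0 -/B1 -/B0.
  field; apply/andP; split; exact: lt0r_neq0.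
have key : dB + dW = B0 * D.
  rewrite hdB' hdW' hD -/M1 -/M0 -/Q1 -/Q0.
  have -> : B1 = Q1 - B0 by lra.
  field; apply/andP; split; exact: lt0r_neq0.
split; first by rewrite hW key mulrAC divff ?mul1r // gt_eqF.
split; first by rewrite hg divr_ge0 // ltW.
split.
  rewrite hg ltr_pdivrMr // mul1r.
  have : VXN = VX - B0 by rewrite hVX hVXN S1 S2 -/Q1; lra.
  lra.
by rewrite key sgrM (gtr0_sg hB0) mul1r.
Qed.

Set Implicit Arguments. Unset Strict Implicit.

Section H.
Context d (T : measurableType d) (R : realType) (P : probability T R).

Definition intg (f : T -> R) := P.-integrable setT (EFin \o f).

Lemma int_ind (f : T -> R) (A : set T) : measurable A -> intg f ->
  intg (fun w => f w * \1_A w).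
Proof.
move=> mA hf.
have hb : [bounded (\1_A x : R) | x in [set: T]].
  exists 1; split; first by rewrite num_real.
  move=> r r1 t _ /=; rewrite /indic.
  have [h|h] := boolP (t \in A).
    by change (`|1 : R| <= r); rewrite normr1 ltW.
  by change (`|0 : R| <= r); rewrite normr0 (le_trans _ (ltW r1)).
have := integrableMl measurableT hf _ hb.
have mi : measurable_fun [set: T] (\1_A : T -> R) by exact: measurable_indic.
move=> /(_ mi) H; rewrite /intg.
by rewrite (_ : (EFin \o _) = ((EFin \o f) \* (EFin \o \1_A))%E) // ; apply/funext => w /=; rewrite EFinM.
Qed.

Lemma int_Z (f : T -> R) (c : R) : intg f -> intg (fun w => c * f w).
Proof.
move=> hf; have H := integrableZl measurableT c hf; rewrite /intg.
by rewrite (_ : (EFin \o _) = (fun x => (c%:E * (EFin \o f) x)%E)) // ; apply/funext => w /=; rewrite EFinM.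
Qed.

Lemma int_sum (J : Type) (s : seq J) (F : J -> T -> R) :
  (forall j, intg (F j)) -> intg (fun w => \sum_(j <- s) F j w).
Proof.
move=> hF; have := @integrable_sum _ _ _ P setT measurableT J s xpredT (fun j w => (F j w)%:E) (fun j _ => hF j).
move=> H; rewrite /intg.
by rewrite (_ : (EFin \o _) = (fun x => (\sum_(j <- s) (F j x)%:E)%E)) // ; apply/funext => w /=; rewrite sumEFin.
Qed.

Lemma Ex_sum (J : Type) (s : seq J) (F : J -> T -> R) :
  (forall j, intg (F j)) ->
  Ex P (fun w => \sum_(j <- s) F j w) = \sum_(j <- s) Ex P (F j).
Proof.
move=> hF; elim: s => [|j s IH].
  rewrite big_nil /Ex.
  under eq_integral do rewrite big_nil.
  by rewrite integral0.
rewrite big_cons -IH.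
have := @RintegralD _ _ _ P setT (F j) (fun w => \sum_(j <- s) F j w) measurableT (hF j) (@int_sum J s F hF).
rewrite /Ex /Rintegral => <-.
by congr fine; apply: eq_integral => w _; rewrite big_cons.
Qed.

Lemma Ex_Z (f : T -> R) (c : R) : intg f -> Ex P (fun w => c * f w) = c * Ex P f.
Proof. by move=> hf; exact: (@RintegralZl _ _ _ P setT f c measurableT hf). Qed.

Lemma int_cst (c : R) : intg (fun _ => c).
Proof. exact: (finite_measure_integrable_cst P c measurableT). Qed.

Lemma Pr_Ex (A : set T) : measurable A -> Pr P A = Ex P (fun w => 1 * \1_A w).
Proof.
move=> mA; rewrite /Ex /Pr.
under eq_integral do rewrite mul1r.
by rewrite integral_indic // setIT.
Qed.

Lemma Ex_null (f : T -> R) (A : set T) : measurable A -> measurable_fun setT f ->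
  Pr P A = 0 -> Ex P (fun w => f w * \1_A w) = 0.
Proof.
move=> mA mf PA.
have PA0 : P A = 0%E.
  have : (P A \is a fin_num) by rewrite fin_num_measure.
  by move=> /fineK <-; rewrite -/(Pr P A) PA.
rewrite /Ex.
rewrite (_ : (fun w => (f w * \1_A w)%:E) = ((EFin \o f) \_ A)); last first.
  apply/funext => w /=; rewrite /patch indicE; case: (w \in A) => /=.
    by rewrite mulr1.
  by rewrite mulr0.
rewrite -integral_mkcond null_set_integral //.
by apply: measurableT_comp => //; exact: measurable_funS mf.
Qed.

Lemma Ex1 : Ex P (fun _ => 1) = 1.
Proof.
have := @Rintegral_cst _ _ _ P setT measurableT 1.
rewrite /Ex /Rintegral => ->; rewrite mul1r; exact: (congr1 fine (probability_setT P)).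
Qed.

End H.

Section M.
Context d (T : measurableType d) (R : realType) (P : probability T R)
  (I : finType) (X : T -> bool) (Y : T -> R) (N : T -> I).
Hypothesis mX : measurable (evX X true).
Hypothesis mN : forall n : I, measurable (evN N n).

Lemma indic_iff (A : set T) w (b : bool) : (A w <-> b) -> \1_A w = b%:R :> R.
Proof.
move=> h; rewrite /indic; case: b h => h.
  by rewrite mem_set //; apply/h.
by rewrite memNset // => /h.
Qed.

Lemma ind_N w n : \1_(evN N n) w = (N w == n)%:R :> R.
Proof. by apply: indic_iff; rewrite /evN /=; split => [->|/eqP]. Qed.

Lemma ind_X w x : \1_(evX X x) w = (X w == x)%:R :> R.
Proof. by apply: indic_iff; rewrite /evX /=; split => [->|/eqP]. Qed.

Lemma ind_XN w x n : \1_(evXN X N x n) w = ((X w == x) && (N w == n))%:R :> R.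
Proof.
apply: indic_iff; rewrite /evXN /=; split => [[-> ->]|/andP[/eqP -> /eqP ->]] //.
by rewrite !eqxx.
Qed.

Lemma mevX x : measurable (evX X x).
Proof.
case: x => //.
rewrite (_ : evX X false = ~` evX X true); first exact: measurableC.
apply/funext => w; apply/propext; rewrite /evX /=.
by case: (X w); split.
Qed.

Lemma mcell x n : measurable (evXN X N x n).
Proof.
rewrite (_ : evXN X N x n = evX X x `&` evN N n) //.
exact: measurableI (mevX x) (mN n).
Qed.

Definition qq x n := Pr P (evXN X N x n).
Definition mm x n := Ex P (fun w => Y w * \1_(evXN X N x n) w).

Lemma decomp (f : T -> R) (hf : intg P f) (G : bool -> I -> R) :
  Ex P (fun w => f w * G (X w) (N w)) =
  \sum_(x : bool) \sum_(n : I) G x n * Ex P (fun w => f w * \1_(evXN X N x n) w).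
Proof.
transitivity (Ex P (fun w => \sum_(xn : bool * I)
    G xn.1 xn.2 * (f w * \1_(evXN X N xn.1 xn.2) w))).
  congr (Ex P _); apply/funext => w.
  rewrite (bigD1 (X w, N w)) //= big1 => [|[x n] /= hne].
    by rewrite ind_XN !eqxx /= mulr1 addr0 mulrC.
  rewrite ind_XN.
  case: eqP => [hx|] /=; last by rewrite !mulr0.
  case: eqP => [hn|] /=; last by rewrite !mulr0.
  by move: hne; rewrite hx hn eqxx.
rewrite Ex_sum; last by move=> [x n]; apply: int_Z; apply: int_ind => //; exact: mcell.
rewrite pair_big /=; apply: eq_bigr => -[x n] _ /=.
by rewrite Ex_Z //; apply: int_ind => //; exact: mcell.
Qed.

Lemma decompF (f : T -> R) (hf : intg P f) (F : T -> R) (G : bool -> I -> R) :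
  (forall w, F w = f w * G (X w) (N w)) ->
  Ex P F = \sum_(x : bool) \sum_(n : I) G x n * Ex P (fun w => f w * \1_(evXN X N x n) w).
Proof.
move=> h; rewrite -decomp //; congr (Ex P _); exact/funext.
Qed.

Lemma decomp1 (F : T -> R) (G : bool -> I -> R) :
  (forall w, F w = G (X w) (N w)) ->
  Ex P F = \sum_(x : bool) \sum_(n : I) G x n * qq x n.
Proof.
move=> h; rewrite (@decompF (fun _ => 1) (int_cst P 1) F G); last by move=> w; rewrite mul1r.
apply: eq_bigr => x _; apply: eq_bigr => n _; rewrite /qq Pr_Ex //; exact: mcell.
Qed.

Hypothesis mY : measurable_fun setT Y.
Hypothesis iY : intg P Y.

Lemma decompY (F : T -> R) (G : bool -> I -> R) :
  (forall w, F w = Y w * G (X w) (N w)) ->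
  Ex P F = \sum_(x : bool) \sum_(n : I) G x n * mm x n.
Proof. by move=> h; rewrite (@decompF Y iY F G). Qed.

Lemma mm_null x n : qq x n = 0 -> mm x n = 0.
Proof. by move=> h; apply: Ex_null => //; exact: mcell. Qed.

Lemma qq_ge0 x n : 0 <= qq x n.
Proof. by rewrite /qq /Pr fine_ge0 // measure_ge0. Qed.

End M.

Section C.
Context (R : comRingType) (I : finType) (F : bool -> I -> R).

Lemma sum_delta (J : finType) (G : J -> R) j : \sum_(k : J) (k == j)%:R * G k = G j.
Proof.
rewrite (bigD1 j) //= eqxx mul1r big1 ?addr0 // => k /negbTE ->; by rewrite mul0r.
Qed.

Lemma cN n : \sum_(y : bool) \sum_(k : I) (k == n)%:R * F y k = F true n + F false n.
Proof. by rewrite big_bool !sum_delta. Qed.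

Lemma cXN n : \sum_(y : bool) \sum_(k : I) (y%:R * (k == n)%:R) * F y k = F true n.
Proof.
rewrite big_bool /=.
under eq_bigr do rewrite mul1r.
under [X in _ + X]eq_bigr do rewrite mul0r mul0r.
by rewrite sum_delta big1 ?addr0.
Qed.

Lemma cX1 x : \sum_(y : bool) \sum_(k : I) (y == x)%:R * F y k = \sum_k F x k.
Proof.
rewrite exchange_big /=.
by apply: eq_bigr => k _; rewrite (@sum_delta _ (fun y => F y k)).
Qed.



Lemma cX x (H : I -> R) :
  \sum_(y : bool) \sum_(k : I) ((y == x)%:R * H k) * F y k = \sum_k H k * F x k.
Proof.
rewrite exchange_big /=; apply: eq_bigr => k _.
rewrite -(@sum_delta _ (fun y => H k * F y k) x); apply: eq_bigr => y _.
by rewrite mulrA (mulrC _ (H k)).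
Qed.

Lemma cI (H : I -> R) :
  \sum_(y : bool) \sum_(k : I) H k * F y k = \sum_k H k * (F true k + F false k).
Proof. by rewrite big_bool /= -big_split /=; apply: eq_bigr => k _; rewrite mulrDr. Qed.

Lemma cT : \sum_(y : bool) \sum_(k : I) y%:R * F y k = \sum_k F true k.
Proof.
rewrite big_bool /= [X in _ + X]big1 ?addr0.
  by apply: eq_bigr => k _; rewrite mul1r.
by move=> k _; rewrite mul0r.
Qed.

Lemma cB (H : bool -> R) :
  \sum_(y : bool) \sum_(k : I) H y * F y k = H true * \sum_k F true k + H false * \sum_k F false k.
Proof. by rewrite big_bool !mulr_sumr. Qed.

End C.

Theorem proposition1 (d : measure_display) (T : measurableType d) (R : realType)
  (P : probability T R) (I : finType) (X : T -> bool) (Y : T -> R) (N : T -> I)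
  (Ylo Yhi : R)
  (mX : measurable (evX X true))
  (mN : forall n : I, measurable (evN N n))
  (mY : measurable_fun setT Y)
  (iY : P.-integrable setT (fun w => (Y w)%:E))
  (hex : exists n : I, 0 < p_ P N n /\ 0 < X_ P X N n /\ X_ P X N n < 1)
  (hlohi : Ylo <= Yhi)
  (hbnd : forall (x : bool) (n : I), 0 < Pr P (evXN X N x n) ->
            Ylo <= Ycell P X Y N x n <= Yhi) :
  Dgap P X Y = (deltaB P X Y N + deltaW P X Y N)
                 / ((1 - gammaR P X N) * Var P (Xr R X))
  /\ 0 <= gammaR P X N /\ gammaR P X N < 1
  /\ Num.sg (Dgap P X Y) = Num.sg (deltaB P X Y N + deltaW P X Y N).
Proof.
have iY' : intg P Y by [].
set q := qq P X N; set m := mm P X Y N.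
have Ep n : p_ P N n = q true n + q false n.
  rewrite /p_ (Pr_Ex P (mN n)) (decomp1 P mX mN (G := fun y k => (k == n)%:R)).
    exact: cN.
  by move=> w; rewrite mul1r ind_N.
have EX n : X_ P X N n = q true n / (q true n + q false n).
  rewrite /X_ /condE -/(p_ P N n) Ep; congr (_ / _).
  rewrite (decomp1 P mX mN (G := fun y k => y%:R * (k == n)%:R)).
    exact: cXN.
  by move=> w; rewrite ind_N.
have h1 (F : I -> R) : \sum_k 1 * F k = \sum_k F k.
  by apply: eq_bigr => k _; rewrite mul1r.
have EPX x : Pr P (evX X x) = \sum_k q x k.
  rewrite (Pr_Ex P (mevX mX x)) (decomp1 P mX mN (G := fun y k => (y == x)%:R)).
    exact: cX1.
  by move=> w; rewrite mul1r ind_X.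
have EY x : Ygrp P X Y x = (\sum_k m x k) / (\sum_k q x k).
  rewrite /Ygrp /condE EPX; congr (_ / _).
  rewrite (decompY mX mN iY' (G := fun y k => (y == x)%:R)).
    exact: cX1.
  by move=> w; rewrite ind_X.
have ECB k : condCov P Y (Xr R X) (evN N k) = m true k / (q true k + q false k)
     - (m true k + m false k) / (q true k + q false k) * X_ P X N k.
  rewrite /condCov -/(X_ P X N k) {1 2}/condE -/(p_ P N k) Ep.
  congr (_ / _ - _ / _ * _).
    rewrite (decompY mX mN iY' (G := fun y k' => y%:R * (k' == k)%:R)).
      exact: cXN.
    by move=> w; rewrite ind_N /Xr mulrA.
  rewrite (decompY mX mN iY' (G := fun y k' => (k' == k)%:R)).
    exact: cN.
  by move=> w; rewrite ind_N.
have ECW y : condCov P Y (XN P X N) (evX X y) =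
    (\sum_k X_ P X N k * m y k) / (\sum_k q y k)
    - (\sum_k m y k) / (\sum_k q y k) * ((\sum_k X_ P X N k * q y k) / (\sum_k q y k)).
  rewrite /condCov -/(Ygrp P X Y y) EY /condE EPX.
  congr (_ / _ - _ * (_ / _)).
    rewrite (decompY mX mN iY' (G := fun y' k => (y' == y)%:R * X_ P X N k)).
      exact: cX.
    by move=> w; rewrite ind_X /XN; ring.
  rewrite (decomp1 P mX mN (G := fun y' k => (y' == y)%:R * X_ P X N k)).
    exact: cX.
  by move=> w; rewrite ind_X /XN; ring.
apply: (@alg _ _ (q true) (q false) (m true) (m false)
           (X_ P X N) _ _ _ _ _ (Var P (XN P X N))).
- by move=> k; exact: qq_ge0.
- by move=> k; exact: qq_ge0.
- move=> k h.
  have hq1 := qq_ge0 P X N true k; have hq0 := qq_ge0 P X N false k.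
  have e1 : q true k = 0 by rewrite /q in h *; lra.
  have e0 : q false k = 0 by rewrite /q in h *; lra.
  by split; apply: (mm_null mX mN mY).
- exact: EX.
- have E1 := Ex1 P.
  rewrite (@decomp1 _ _ _ P _ X N mX mN (fun _ => 1) (fun _ _ => 1)) // in E1.
  by rewrite big_bool /= !h1 in E1.
- case: hex => n [hn1 hn2]; exists n; rewrite -Ep; split => //.
- by rewrite /Dgap !EY.
- rewrite /deltaB (decomp1 P mX mN (G := fun y k => condCov P Y (Xr R X) (evN N k))) // cI.
  by apply: eq_bigr => k _; rewrite ECB mulrC.
- rewrite /deltaW (decomp1 P mX mN (G := fun y k => condCov P Y (XN P X N) (evX X y))) // cB.
  by rewrite !ECW.
- rewrite /Var; congr (_ - _ ^+ 2).
    rewrite (decomp1 P mX mN (G := fun y k => y%:R)); first exact: cT.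
    by move=> w; rewrite /Xr; case: (X w); rewrite /= ?expr1n ?expr0n.
  rewrite (decomp1 P mX mN (G := fun y k => y%:R)); first exact: cT.
  by [].
- rewrite /Var; congr (_ - _ ^+ 2).
    rewrite (decomp1 P mX mN (G := fun y k => X_ P X N k ^+ 2)); first exact: cI.
    by [].
  rewrite (decomp1 P mX mN (G := fun y k => X_ P X N k)); first exact: cI.
  by [].
- by [].
Qed.
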